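(* Let $G=(V,E)$ be a finite graph and $B \subset U \subset V$. Assume the random permutation on $(V,E)$ has cycle length bounded by a random variable $\xi$ with $\mathbb E(\xi) < 2$. Let $C>0$ and $\kappa>0$ be constants such that the total offspring $W$ of a Galton–Watson process with initial population $1$ and offspring distribution $\xi-1$ satisfies $\mathbb P(W > n) \leq C e^{-2\kappa n}$ for all $n$. Then for any $\mathcal F_B$-measurable function $f$, $$|\mathbb E_V(f) - \mathbb E_U(f)| \leq 2 C \|f\|_{\infty} \sum_{x \in V \setminus U} e^{-\kappa d(x, B)},$$ where $d$ is the graph distance on $G$.
   Context: For $U\subset V$, $\mathcal S_U$ is the set of bijections $\pi:U\to U$ with $\pi(x)=x$ or $\{x,\pi(x)\}\in E$; $\mathbb P_U(\pi)=e^{-\alpha\sum_{x\in U}\mathbb 1\{\pi(x)\neq x\}}/Z(U)$, $\mathbb E_U$ its expectation, where a function on $\mathcal S_V$ is evaluated at $\pi\oplus\mathrm{id}$ (extension by the identity outside $U$). $\mathcal F_B$ is the $\sigma$-algebra on $\mathcal S_V$ generated by the values $\pi(x),\pi^{-1}(x)$, $x\in B$. Cycle length bounded by $\xi$ on $(V,E)$: for all $\ell\ge1$, $\sup_{U\subset V\text{ finite}}\sup_{x\in U}\mathbb P_U(|\gamma_x|\ge\ell)\le\mathbb P(\xi\ge\ell)$, $|\gamma_x|$ the number of vertices of the cycle of $\pi$ containing $x$. *)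

(* Defs.v *)
From HB Require Import structures.
From mathcomp Require Import all_boot all_order all_algebra all_fingroup.
From mathcomp Require Import boolp classical_sets reals ereal sequences exp.

Set Implicit Arguments.
Unset Strict Implicit.
Unset Printing Implicit Defensive.

Import Order.TTheory GRing.Theory Num.Theory.
Local Open Scope ring_scope.

Section RandomPermutation.
Variables (R : realType) (T : finType) (e : rel T) (alpha : R).

(* pi belongs to S_U : pi is a bijection of T fixing every point outside U
   (i.e. a bijection of U extended by the identity), and pi x = x or
   {x, pi x} is an edge. *)
Definition admissible (U : {set T}) (pi : {perm T}) : bool :=
  perm_on U pi && [forall x, (pi x == x) || e x (pi x)].

Definition pweight (U : {set T}) (pi : {perm T}) : R :=
  expR (- alpha * (#|[set x in U | pi x != x]|)%:R).

Definition Zpart (U : {set T}) : R :=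
  \sum_(pi : {perm T} | admissible U pi) pweight U pi.

(* E_U(f), f a function on permutations of V, evaluated at pi (+) id *)
Definition Exp (U : {set T}) (f : {perm T} -> R) : R :=
  \sum_(pi : {perm T} | admissible U pi) f pi * pweight U pi / Zpart U.

Definition Prob (U : {set T}) (A : pred {perm T}) : R :=
  Exp U (fun pi => (A pi)%:R).

(* f is F_B-measurable: on S_V, f only depends on pi(x), pi^{-1}(x), x in B *)
Definition FB_measurable (B : {set T}) (f : {perm T} -> R) : Prop :=
  forall pi sigma : {perm T},
    admissible [set: T] pi -> admissible [set: T] sigma ->
    (forall x, x \in B -> pi x = sigma x /\ (pi^-1)%g x = (sigma^-1)%g x) ->
    f pi = f sigma.

Definition supnorm (f : {perm T} -> R) : R :=
  \big[Num.max/0]_(pi : {perm T} | admissible [set: T] pi) `|f pi|.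

Definition reach (B : {set T}) (x : T) (n : nat) : bool :=
  [exists s : n.-tuple T, path e x s && (last x s \in B)].

(* exp(-kappa * d(x,B)), with the convention e^{-kappa * oo} = 0 when
   d(x,B) = oo (no path from x to B). *)
Definition decay (kappa : R) (B : {set T}) (x : T) : R :=
  match pselect (exists n, reach B x n) with
  | left h => expR (- kappa * (ex_minn h)%:R)
  | right _ => 0
  end.

End RandomPermutation.

Section GW.
Variables (R : realType) (q : nat -> R).

(* law of the sum of i i.i.d. copies with law q: conv i j = P(X_1+..+X_i = j) *)
Fixpoint conv (i : nat) (j : nat) : R :=
  match i with
  | 0 => (j == 0)%:R
  | i'.+1 => \sum_(a < j.+1) q a * conv i' (j - a)
  end.

(* gw_joint m z s = P(Z_m = z, Z_0 + ... + Z_m = s) for the Galton-Watson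
   process with Z_0 = 1 and offspring law q. *)
Fixpoint gw_joint (m : nat) (z s : nat) : R :=
  match m with
  | 0 => ((z == 1%N) && (s == 1%N))%:R
  | m'.+1 => \sum_(z0 < s.+1) \sum_(s0 < s.+1)
               (if (s0 + z == s)%N then gw_joint m' z0 s0 * conv z0 z else 0)
  end.

(* P(Z_0 + ... + Z_m > n) *)
Definition gw_partial_total_gt (m n : nat) : R :=
  1 - \sum_(z < n.+1) \sum_(s < n.+1) gw_joint m z s.

End GW.

(* Main.v *)
Require Import Defs.
From HB Require Import structures.
From mathcomp Require Import all_boot all_order all_algebra all_fingroup.
From mathcomp Require Import boolp classical_sets reals ereal sequences exp.
Import Order.TTheory GRing.Theory Num.Theory.
Local Open Scope ring_scope.
From mathcomp Require Import zify ring lra.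
Set Implicit Arguments.
Unset Strict Implicit.
Unset Printing Implicit Defensive.
Section Chain.
Variables (R : realType) (q : nat -> R).
Hypothesis q_ge0 : forall a, 0 <= q a.
Hypothesis q_le1 : forall N, \sum_(a < N) q a <= 1.
Variable D : nat.

Lemma conv_ge0 r y : 0 <= conv q r y.
Proof.
elim: r y => [|r IH] y /=; first by rewrite ler0n.
by apply: sumr_ge0 => a _; rewrite mulr_ge0.
Qed.

Lemma tri_le N (F : nat -> nat -> R) : (forall a b, 0 <= F a b) ->
  \sum_(y < N) \sum_(a < y.+1) F a (y - a)%N <= \sum_(a < N) \sum_(b < N) F a b.
Proof.
elim: N F => [|N IH] F F0; first by rewrite !big_ord0.
have -> : \sum_(y < N.+1) \sum_(a < y.+1) F a (y - a)%N =
   \sum_(y < N.+1) F 0%N y + \sum_(y < N) \sum_(a < y.+1) F a.+1 (y - a)%N.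
  under eq_bigr => y _ do rewrite big_ord_recl subn0.
  rewrite big_split /=; congr (_ + _).
  rewrite big_ord_recl big_ord0 add0r; apply: eq_bigr => y _; apply: eq_bigr => a _.
  by rewrite /bump /= subSS.
rewrite [X in _ <= X]big_ord_recl /=; apply: lerD; first by [].
  idtac.
apply: le_trans (IH (fun a b => F a.+1 b) (fun a b => F0 _ _)) _.
apply: ler_sum => a _; rewrite big_ord_recr /= lerDl; exact: F0.
Qed.

Lemma sum_ind_le N j (F : nat -> R) : (forall i, 0 <= F i) ->
  \sum_(i < N) (i == j :> nat)%:R * F i <= F j.
Proof.
move=> F0; case: (ltnP j N) => jN.
  rewrite (bigD1 (Ordinal jN)) //= eqxx mul1r big1 ?addr0 // => i /eqP ne.
  case: eqP => [h|_]; last by rewrite mul0r.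
  by exfalso; apply: ne; apply: val_inj.
rewrite big1 // => i _; case: eqP => [h|_]; last by rewrite mul0r.
by move: (ltn_ord i); rewrite h ltnNge jN.
Qed.

Lemma sum_widen_le n m (F : nat -> R) : (n <= m)%N -> (forall i, 0 <= F i) ->
  \sum_(i < n) F i <= \sum_(i < m) F i.
Proof.
move=> nm F0; rewrite (big_ord_widen m F nm) [X in _ <= X](bigID (fun i : 'I_m => (i < n)%N)) /=.
rewrite lerDl; exact: sumr_ge0.
Qed.

Definition okG (G : nat -> nat -> R) :=
  [/\ forall z s, 0 <= G z s, forall z s, G z s <= 1,
      forall z z' s s', (z <= z')%N -> (s <= s')%N -> G z' s' <= G z s
    & forall z s, (D < s)%N -> G z s = 0].

Definition gmk (G : nat -> nat -> R) r n s :=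
  \sum_(y < D.+1) conv q r y * G (n + y)%N (s + y)%N.

Section GmProps.
Variable G : nat -> nat -> R.
Hypothesis oG : okG G.

Lemma gmk_ge0 r n s : 0 <= gmk G r n s.
Proof. case: oG => g0 _ _ _; apply: sumr_ge0 => y _; by rewrite mulr_ge0 ?conv_ge0. Qed.

Lemma gmk0 n s : gmk G 0 n s = G n s.
Proof.
rewrite /gmk big_ord_recl /= mul1r !addn0 big1 ?addr0 // => y _.
by rewrite mul0r.
Qed.

Lemma gmk_M3 r n s :
  gmk G r.+1 n s <= \sum_(a < D.+1) q a * gmk G r (n + a)%N (s + a)%N.
Proof.
case: oG => g0 _ _ _.
rewrite /gmk /=.
have -> : \sum_(y < D.+1) (\sum_(a < y.+1) q a * conv q r (y - a)) * G (n + y)%N (s + y)%N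
  = \sum_(y < D.+1) \sum_(a < y.+1)
      (fun a b => q a * conv q r b * G (n + a + b)%N (s + a + b)%N) a (y - a)%N.
  apply: eq_bigr => y _; rewrite mulr_suml; apply: eq_bigr => a _ /=.
  by rewrite -!addnA subnKC // -ltnS.
refine (le_trans (@tri_le D.+1 (fun a b => q a * conv q r b * G (n + a + b)%N (s + a + b)%N) _) _).
  by move=> a b; rewrite !mulr_ge0 ?conv_ge0.
apply: ler_sum => a _; rewrite mulr_sumr; apply: ler_sum => b _.
by rewrite mulrA.
Qed.

Lemma gmk_zero r n s : (D < s)%N -> gmk G r n s = 0.
Proof.
case: oG => _ _ _ gz Ds; rewrite /gmk big1 // => y _.
by rewrite gz ?mulr0 // (leq_trans Ds) // leq_addr.
Qed.

Lemma gmk_mon_ns r n n' s s' : (n <= n')%N -> (s <= s')%N ->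
  gmk G r n' s' <= gmk G r n s.
Proof.
case: oG => _ _ gm _ nn ss; apply: ler_sum => y _.
by apply: ler_wpM2l; [exact: conv_ge0 | apply: gm; rewrite leq_add2r].
Qed.

Lemma gmk_le1 r n s : gmk G r n s <= 1.
Proof.
case: oG => _ g1 _ _.
elim: r n s => [|r IH] n s; first by rewrite gmk0.
apply: le_trans (gmk_M3 _ _ _) _; apply: le_trans (q_le1 D.+1).
by apply: ler_sum => a _; apply: ler_piMr => //.
Qed.

Lemma gmk_mon_r r r' n s : (r <= r')%N -> gmk G r' n s <= gmk G r n s.
Proof.
move=> /subnK <-; elim: (r' - r)%N => [|k IH] //=.
apply: le_trans IH; rewrite addSn; apply: le_trans (gmk_M3 _ _ _) _.
apply: le_trans (_ : \sum_(a < D.+1) q a * gmk G (k + r) n s <= _).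
  apply: ler_sum => a _; apply: ler_wpM2l => //; apply: gmk_mon_ns; exact: leq_addr.
by rewrite -mulr_suml; apply: ler_piMl; [exact: gmk_ge0|exact: q_le1].
Qed.

Lemma gmk_mon r r' n n' s s' : (r <= r')%N -> (n <= n')%N -> (s <= s')%N ->
  gmk G r' n' s' <= gmk G r n s.
Proof.
move=> rr nn ss; apply: le_trans (gmk_mon_r _ _ rr); exact: gmk_mon_ns.
Qed.

Lemma ok_next : okG (fun z s => (s <= D)%:R * gmk G z 0 s).
Proof.
split=> [z s|z s|z z' s s' zz ss|z s Ds].
- by rewrite mulr_ge0 ?ler0n ?gmk_ge0.
- case: (s <= D)%N; rewrite ?mul1r ?mul0r ?gmk_le1 //.
- case: (leqP s' D) => hs'.
    by rewrite (leq_trans ss hs') !mul1r; apply: gmk_mon.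
  by rewrite mul0r mulr_ge0 ?ler0n ?gmk_ge0.
- by rewrite leqNgt Ds mul0r.
Qed.

End GmProps.

Fixpoint good (k : nat) : nat -> nat -> R :=
  match k with
  | 0 => fun z s => (s <= D)%:R
  | k'.+1 => fun z s => (s <= D)%:R * gmk (good k') z 0 s
  end.

Lemma ok_good k : okG (good k).
Proof.
elim: k => [|k IH] /=; last exact: ok_next.
split=> [z s|z s|z z' s s' _ ss|z s Ds]; rewrite ?ler0n //.
- by case: (s <= D)%N.
- case: (leqP s' D) => h; first by rewrite (leq_trans ss h).
  by rewrite ler0n.
- by rewrite leqNgt Ds.
Qed.

Definition gm k := gmk (good k).

End Chain.
Section GWpart.
Variables (R : realType) (q : nat -> R).
Hypothesis q_ge0 : forall a, 0 <= q a.
Hypothesis q_le1 : forall N, \sum_(a < N) q a <= 1.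
Variable D : nat.

Lemma gw_joint_ge0 m z s : 0 <= gw_joint q m z s.
Proof.
elim: m z s => [|m IH] z s /=; first by rewrite ler0n.
apply: sumr_ge0 => z0 _; apply: sumr_ge0 => s0 _; case: eqP => _ //.
by rewrite mulr_ge0 ?conv_ge0.
Qed.

Lemma L3 N z (A Bf : nat -> R) : (forall i, 0 <= A i) -> (forall i, 0 <= Bf i) ->
  \sum_(s < N) (\sum_(s0 < s.+1) (if (s0 + z == s)%N then A s0 else 0)) * Bf s
  <= \sum_(s0 < N) A s0 * Bf (s0 + z)%N.
Proof.
move=> A0 B0.
apply: le_trans (_ : \sum_(s < N) \sum_(s0 < N) (if (s0 + z == s)%N then A s0 else 0) * Bf s <= _).
  apply: ler_sum => s _; rewrite mulr_suml.
  apply: (@sum_widen_le R s.+1 N (fun s0 => (if (s0 + z == s)%N then A s0 else 0) * Bf s)) => // i.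
  by case: eqP => _; rewrite ?mul0r // mulr_ge0.
rewrite exchange_big /=; apply: ler_sum => s0 _.
apply: le_trans (@sum_ind_le R N (s0 + z)%N (fun i => A s0 * Bf i) _) => //.
  apply: ler_sum => s _; rewrite eq_sym; case: eqP => _; by rewrite ?mul0r ?mul1r.
by move=> i; rewrite mulr_ge0.
Qed.

Lemma gw_step m (G : nat -> nat -> R) : okG D G ->
  \sum_(z < D.+1) \sum_(s < D.+1) gw_joint q m.+1 z s * G z s <=
  \sum_(z0 < D.+1) \sum_(s0 < D.+1) gw_joint q m z0 s0 * ((s0 <= D)%:R * gmk q D G z0 0 s0).
Proof.
move=> oG; have [g0 _ _ _] := oG.
apply: le_trans (_ : \sum_(z < D.+1) \sum_(s < D.+1) \sum_(z0 < D.+1)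
   (\sum_(s0 < s.+1) (if (s0 + z == s)%N then gw_joint q m z0 s0 * conv q z0 z else 0)) * G z s <= _).
  apply: ler_sum => z _; apply: ler_sum => s _ /=; rewrite mulr_suml.
  apply: (@sum_widen_le R s.+1 D.+1 (fun z0 => (\sum_(s0 < s.+1) (if (s0 + z == s)%N then gw_joint q m z0 s0 * conv q z0 z else 0)) * G z s)) => // i.
  rewrite mulr_ge0 // sumr_ge0 // => s0 _; case: eqP => _ //.
  by rewrite mulr_ge0 ?conv_ge0 ?gw_joint_ge0.
apply: le_trans (_ : \sum_(z < D.+1) \sum_(z0 < D.+1) \sum_(s0 < D.+1)
   (gw_joint q m z0 s0 * conv q z0 z) * G z (s0 + z)%N <= _).
  apply: ler_sum => z _; rewrite exchange_big /=; apply: ler_sum => z0 _.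
  apply: (@L3 D.+1 z (fun s0 => gw_joint q m z0 s0 * conv q z0 z) (fun s => G z s)) => i /=;
  by rewrite ?mulr_ge0 ?conv_ge0 ?gw_joint_ge0.
rewrite exchange_big /=; apply: ler_sum => z0 _.
rewrite exchange_big /=; apply: ler_sum => s0 _.
rewrite -ltnS ltn_ord mul1r /gmk mulr_sumr; apply: ler_sum => z _.
by rewrite add0n addnC mulrA.
Qed.

Lemma gw_le k m :
  \sum_(z < D.+1) \sum_(s < D.+1) gw_joint q (m + k) z s <=
  \sum_(z < D.+1) \sum_(s < D.+1) gw_joint q m z s * good q D k z s.
Proof.
elim: k m => [|k IH] m.
  rewrite addn0; apply: ler_sum => z _; apply: ler_sum => s _ /=.
  by rewrite -ltnS ltn_ord mulr1.
rewrite addnS -addSn; apply: le_trans (IH m.+1) _.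
exact: gw_step (ok_good q_ge0 q_le1 D k).
Qed.

Lemma gw_final K : 1 - gm q D K 1 0 1 <= gw_partial_total_gt q K.+1 D.
Proof.
rewrite /gw_partial_total_gt; apply: lerB => //.
have := gw_le K.+1 0; rewrite add0n => h; apply: le_trans h _.
have [g0 _ _ _] := ok_good q_ge0 q_le1 D K.+1.
apply: le_trans (_ : \sum_(z < D.+1) (z == 1%N :> nat)%:R * good q D K.+1 z 1 <= _).
  apply: ler_sum => z _ /=.
  apply: le_trans (_ : \sum_(s < D.+1) (z == 1%N :> nat)%:R * ((s == 1%N :> nat)%:R * good q D K.+1 z s) <= _).
    apply: ler_sum => s _ /=; by case: (z == 1%N :> nat); case: (s == 1%N :> nat); rewrite /= ?mul1r ?mul0r.
  rewrite -mulr_sumr; apply: ler_wpM2l; first by rewrite ler0n.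
  exact: (@sum_ind_le R D.+1 1 (fun s => good q D K.+1 z s)).
apply: le_trans (@sum_ind_le R D.+1 1 (fun z => good q D K.+1 z 1) (fun i => g0 i 1)) _ => /=.
rewrite /gm; case: (0 < D)%N; rewrite ?mul1r ?mul0r //.
exact: (gmk_ge0 q_ge0 (ok_good q_ge0 q_le1 D K)).
Qed.

End GWpart.
Section Glue.
Variable T : finType.

Definition gluef (S : {set T}) (p s : {perm T}) x := if x \in S then p x else s x.
Definition glue (S : {set T}) (p s : {perm T}) : {perm T} :=
  insubd (1%g : {perm T}) [ffun x => gluef S p s x].

Lemma glueE (S : {set T}) (p s : {perm T}) : injective (gluef S p s) -> forall x, glue S p s x = gluef S p s x.
Proof.
move=> inj x; rewrite /glue.
have h : [ffun x => gluef S p s x] \in [pred g : {ffun T -> T} | injectiveb g].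
  by rewrite inE; apply/injectiveP => y z; rewrite !ffunE; apply: inj.
by rewrite -pvalE insubdK // ffunE.
Qed.

Lemma glue_inj (S : {set T}) (p s : {perm T}) : (forall x, x \in S -> p x \in S) -> (forall x, x \notin S -> s x \notin S) ->
  injective (gluef S p s).
Proof.
move=> hp hs x y; rewrite /gluef.
case: (boolP (x \in S)) => xS; case: (boolP (y \in S)) => yS.
- exact: perm_inj.
- by move=> e; move: (hp _ xS) (hs _ yS); rewrite e => ->.
- by move=> e; move: (hp _ yS) (hs _ xS); rewrite e => ->.
- exact: perm_inj.
Qed.

Lemma glueE2 (S : {set T}) (p s : {perm T}) : (forall x, x \in S -> p x \in S) ->
  (forall x, x \notin S -> s x \notin S) -> forall x, glue S p s x = if x \in S then p x else s x.
Proof. by move=> h1 h2 x; rewrite glueE //; apply: glue_inj. Qed.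

Lemma orb_stable (p : {perm T}) a x : (p x \in porbit p a) = (x \in porbit p a).
Proof.
rewrite -!eq_porbit_mem; have := porbit_perm p 1 x; rewrite expg1 => ->; by [].
Qed.

Lemma orb_iter (p : {perm T}) a i : (p ^+ i)%g a \in porbit p a.
Proof. exact: mem_porbit. Qed.

Lemma orb_sub (W : {set T}) (p : {perm T}) a : perm_on W p -> a \in W -> porbit p a \subset W.
Proof.
move=> pW aW; apply/fintype.subsetP => y /porbitP [i ->]; rewrite permX.
elim: i => [|i IH] //=; by rewrite perm_closed.
Qed.

Lemma orb_fix_out (p : {perm T}) a x : p x != x -> x \in porbit p a -> p x \in porbit p a.
Proof. by move=> _ h; rewrite orb_stable. Qed.

End Glue.
Section ProbPart.
Variables (R : realType) (T : finType) (e : rel T) (alpha : R).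

Definition nf (W : {set T}) (p : {perm T}) := #|[set x in W | p x != x]|.
Definition Pr (W : {set T}) (p : {perm T}) := pweight alpha W p / Zpart e alpha W.

Lemma adm_id (W : {set T}) : admissible e W 1%g.
Proof. by rewrite /admissible perm_on1 /=; apply/forallP => x; rewrite perm1 eqxx. Qed.

Lemma pweight_gt0 (W : {set T}) (p : {perm T}) : 0 < pweight alpha W p.
Proof. exact: expR_gt0. Qed.

Lemma Zpart_gt0 (W : {set T}) : 0 < Zpart e alpha W.
Proof.
rewrite /Zpart (bigD1 1%g) ?adm_id //=.
apply: (lt_le_trans (pweight_gt0 W 1%g)); rewrite lerDl.
by apply: sumr_ge0 => p _; apply: ltW; apply: pweight_gt0.
Qed.

Lemma Pr_ge0 (W : {set T}) (p : {perm T}) : 0 <= Pr W p.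
Proof. by rewrite /Pr divr_ge0 // ltW ?pweight_gt0 ?Zpart_gt0. Qed.

Lemma sumPr (W : {set T}) : \sum_(p | admissible e W p) Pr W p = 1.
Proof. by rewrite /Pr -mulr_suml divff // gt_eqF // Zpart_gt0. Qed.

Lemma ExpE (W : {set T}) (F : {perm T} -> R) : Exp e alpha W F = \sum_(p | admissible e W p) Pr W p * F p.
Proof. rewrite /Exp; apply: eq_bigr => p _; rewrite /Pr. by rewrite [RHS]mulrC mulrA. Qed.

Lemma adm_sub (W W' : {set T}) (p : {perm T}) : W \subset W' -> admissible e W p -> admissible e W' p.
Proof.
move=> sW /andP [pW h]; apply/andP; split => //.
exact: fintype.subset_trans pW sW.
Qed.

Lemma adm_T (W : {set T}) (p : {perm T}) : admissible e W p -> admissible e [set: T] p.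
Proof. by apply: adm_sub; apply/fintype.subsetP => x; rewrite inE. Qed.

Lemma Exp_absW (W : {set T}) (F : {perm T} -> R) (M : R) : (forall p, admissible e W p -> `|F p| <= M) ->
  `|Exp e alpha W F| <= M.
Proof.
move=> hF; rewrite ExpE; apply: le_trans (ler_norm_sum _ _ _) _.
rewrite -[M]mul1r -(sumPr W) mulr_suml; apply: ler_sum => p pW.
rewrite normrM ger0_norm ?Pr_ge0 //; apply: ler_wpM2l; first exact: Pr_ge0.
exact: hF.
Qed.

Lemma Exp_abs (W : {set T}) (F : {perm T} -> R) (M : R) : (forall p, admissible e [set: T] p -> `|F p| <= M) ->
  `|Exp e alpha W F| <= M.
Proof.
move=> hF; rewrite ExpE; apply: le_trans (ler_norm_sum _ _ _) _.
rewrite -[M]mul1r -(sumPr W) mulr_suml; apply: ler_sum => p pW.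
rewrite normrM ger0_norm ?Pr_ge0 //; apply: ler_wpM2l; first exact: Pr_ge0.
by apply: hF; apply: adm_T pW.
Qed.

Lemma supnorm_ge0 (f : {perm T} -> R) : 0 <= supnorm e f.
Proof. exact: bigmax_ge_id. Qed.

Lemma supnorm_ge (f : {perm T} -> R) p : admissible e [set: T] p -> `|f p| <= supnorm e f.
Proof. by move=> h; rewrite /supnorm; apply: le_bigmax_cond. Qed.

End ProbPart.
Section Markov.
Variables (R : realType) (T : finType) (e : rel T) (alpha : R).

Definition ok_on (W : {set T}) (g : {perm T}) x :=
  ((g x != x) ==> (x \in W)) && ((g x == x) || e x (g x)).

Lemma adm_of (W : {set T}) (g : {perm T}) : (forall x, ok_on W g x) -> admissible e W g.
Proof.
move=> h; apply/andP; split.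
  apply/fintype.subsetP => x; rewrite inE => gx.
  by have /andP [h1 _] := h x; exact: (implyP h1 gx).
by apply/forallP => x; have /andP [_ ->] := h x.
Qed.

Lemma adm_to (W : {set T}) (g : {perm T}) : admissible e W g -> forall x, ok_on W g x.
Proof.
move=> /andP [gW /forallP h] x; apply/andP; split; last exact: h.
apply/implyP => gx; apply: (fintype.subsetP gW); by rewrite inE.
Qed.

Lemma ok_on_sub (W W' : {set T}) g x : W \subset W' -> ok_on W g x -> ok_on W' g x.
Proof.
move=> sW /andP [h1 h2]; apply/andP; split => //.
by apply/implyP => gx; apply: (fintype.subsetP sW); exact: (implyP h1 gx).
Qed.

Section Fixed.
Variables (W : {set T}) (a : T) (p : {perm T}).
Hypotheses (aW : a \in W) (pW : admissible e W p).
Let O := porbit p a.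

Lemma OW : O \subset W.
Proof. by apply: orb_sub aW; case/andP: pW. Qed.

Lemma sig_fix (s : {perm T}) : admissible e (W :\: O) s -> forall x, x \in O -> s x = x.
Proof.
move=> /andP [sW _] x xO; apply: out_perm sW _; by rewrite inE xO.
Qed.

Lemma sig_out (s : {perm T}) : admissible e (W :\: O) s -> forall x, x \notin O -> s x \notin O.
Proof.
move=> sa x xO; apply/negP => h.
have := sig_fix sa h; move/perm_inj => sx; by move: h; rewrite sx (negbTE xO).
Qed.

Lemma inj1 (s : {perm T}) : admissible e (W :\: O) s -> injective (gluef O p s).
Proof. move=> sa; apply: glue_inj => x; [by rewrite orb_stable | exact: sig_out]. Qed.

Lemma inj2 : injective (gluef O 1%g p).
Proof. apply: glue_inj => x; by rewrite ?perm1 // orb_stable. Qed.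

Lemma g1E (s : {perm T}) : admissible e (W :\: O) s -> forall x, glue O p s x = if x \in O then p x else s x.
Proof. by move=> sa x; rewrite glueE //; apply: inj1. Qed.

Lemma g2E x : glue O 1%g p x = if x \in O then x else p x.
Proof. rewrite glueE; last exact: inj2. by rewrite /gluef perm1. Qed.

Lemma porbit_g1 (s : {perm T}) : admissible e (W :\: O) s -> porbit (glue O p s) a = O.
Proof.
move=> sa.
have it : forall i, ((glue O p s) ^+ i)%g a = (p ^+ i)%g a.
  elim=> [|i IH]; first by rewrite !expg0 !perm1.
  by rewrite !expgSr !permM IH (g1E sa) mem_porbit.
apply/setP => y; apply/porbitP/porbitP => [[i ->]|[i ->]]; exists i; by rewrite it.
Qed.

Lemma adm_g1 (s : {perm T}) : admissible e (W :\: O) s -> admissible e W (glue O p s).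
Proof.
move=> sa; apply: adm_of => x; rewrite /ok_on (g1E sa).
case: ifP => xO; first exact: adm_to pW x.
apply: ok_on_sub (adm_to sa x); apply/fintype.subsetP => y; rewrite inE; by case/andP.
Qed.

Lemma adm_g2 : admissible e (W :\: O) (glue O 1%g p).
Proof.
apply: adm_of => x; rewrite /ok_on g2E.
case: ifP => xO; first by rewrite eqxx.
have /andP [h1 h2] := adm_to pW x; apply/andP; split => //.
by apply/implyP => gx; rewrite inE xO (implyP h1 gx).
Qed.

Lemma nf_split (g : {perm T}) : nf W g = (nf O g + nf (W :\: O) g)%N.
Proof.
rewrite /nf -(cardsID O [set x in W | g x != x]); congr (_ + _)%N; apply: eq_card => x;
  rewrite !inE; last by rewrite andbA.
case: (boolP (x \in O)) => xO; rewrite ?andbF ?andbT ?andFb //.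
by rewrite (fintype.subsetP OW).
Qed.

End Fixed.

Lemma pweightM (W1 W2 : {set T}) (g h : {perm T}) :
  pweight alpha W1 g * pweight alpha W2 h = expR (- alpha * (nf W1 g + nf W2 h)%N%:R).
Proof. by rewrite /pweight -expRD natrD mulrDr. Qed.


Lemma markov (W : {set T}) (a : T) (aW : a \in W) (F : {perm T} -> R) :
  \sum_(p | admissible e W p) Pr e alpha W p * F p =
  \sum_(p | admissible e W p) Pr e alpha W p *
     \sum_(s | admissible e (W :\: porbit p a) s)
        Pr e alpha (W :\: porbit p a) s * F (glue (porbit p a) p s).
Proof.
pose P := fun u : {perm T} * {perm T} =>
  admissible e W u.1 && admissible e (W :\: porbit u.1 a) u.2.
pose h := fun u : {perm T} * {perm T} =>
  (glue (porbit u.1 a) u.1 u.2, glue (porbit u.1 a) 1%g u.1).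
have hP : forall u, P u -> P (h u) /\ h (h u) = u.
  case=> p s /andP /= [pW sa].
  have O1 := porbit_g1 sa.
  have pW' := adm_g1 pW sa.
  have s' := adm_g2 a pW.
  rewrite /P /h /= O1 pW' s'; split => //.
  have s'W : admissible e (W :\: porbit (glue (porbit p a) p s) a) (glue (porbit p a) 1%g p).
    by rewrite O1.
  congr (_, _); apply/permP => x.
    rewrite glueE2 ?(g1E sa) ?g2E; first by case: (x \in porbit p a).
      by move=> y yO; rewrite (g1E sa) yO orb_stable.
    by move=> y yO; rewrite g2E (negbTE yO) orb_stable.
  rewrite glueE2 ?perm1 ?(g1E sa) //; last by move=> y yO; rewrite (g1E sa) (negbTE yO) (sig_out sa).
    by case: (boolP (x \in porbit p a)) => xO //; rewrite (sig_fix sa xO).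
  by move=> y; rewrite perm1.
under [RHS]eq_bigr => p _ do rewrite mulr_sumr.
rewrite (pair_big_dep (fun p => admissible e W p) (fun p s => admissible e (W :\: porbit p a) s)
   (fun p s => Pr e alpha W p * (Pr e alpha (W :\: porbit p a) s * F (glue (porbit p a) p s)))) /=.
rewrite (reindex_onto h h); last by move=> u /hP [].
rewrite (eq_bigl P); last first.
  move=> u; apply/idP/idP.
    move/andP => [Phu /eqP hh]; have [Phhu _] := hP _ Phu.
    by move: Phhu; rewrite hh.
  by move=> Pu; have [Phu hh] := hP _ Pu; rewrite hh eqxx andbT; exact: Phu.
rewrite (eq_bigr (fun u => Pr e alpha W u.1 * F u.1 * Pr e alpha (W :\: porbit u.1 a) u.2)); last first.
  case=> p s /andP /= [pW sa].
  have O1 := porbit_g1 sa.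
  have pW' := adm_g1 pW sa.
  have s' := adm_g2 a pW.
  have s'W : admissible e (W :\: porbit (glue (porbit p a) p s) a) (glue (porbit p a) 1%g p).
    by rewrite O1.
  have -> : glue (porbit (glue (porbit p a) p s) a) (glue (porbit p a) p s) (glue (porbit p a) 1%g p) = p.
    apply/permP => x; rewrite O1 glueE2 ?(g1E sa) ?g2E; first by case: (x \in porbit p a).
      by move=> y yO; rewrite (g1E sa) yO orb_stable.
    by move=> y yO; rewrite g2E (negbTE yO) orb_stable.
  rewrite O1 mulrA [RHS]mulrAC; congr (_ * _).
  rewrite /Pr mulrACA [RHS]mulrACA; congr (_ * _); rewrite !pweightM; congr (expR (_ * _%:R)).
  rewrite !(nf_split aW pW).
  have e1 : nf (porbit p a) (glue (porbit p a) p s) = nf (porbit p a) p.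
    apply: eq_card => x; rewrite !inE (g1E sa); by case: ifP.
  have e2 : nf (W :\: porbit p a) (glue (porbit p a) p s) = nf (W :\: porbit p a) s.
    apply: eq_card => x; rewrite !inE (g1E sa); by case: ifP.
  have e3 : nf (W :\: porbit p a) (glue (porbit p a) 1%g p) = nf (W :\: porbit p a) p.
    apply: eq_card => x; rewrite !inE g2E; by case: ifP; rewrite ?eqxx.
  rewrite e1 e2 e3; lia.
rewrite -(pair_big_dep (fun p => admissible e W p) (fun p s => admissible e (W :\: porbit p a) s)
   (fun p s => Pr e alpha W p * F p * Pr e alpha (W :\: porbit p a) s)) /=.
by apply: eq_bigr => p _; rewrite -mulr_sumr sumPr mulr1.
Qed.

End Markov.
Section Conn.
Variables (T : finType) (e : rel T).

Definition rs (Y : {set T}) : rel T := [rel u v | (u \in Y) && (v \in Y) && e u v].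
Definition Conn (x : T) (Y : {set T}) := x \in Y /\ forall y, y \in Y -> connect (rs Y) x y.

Lemma rs_sub (Y Y' : {set T}) : Y \subset Y' -> forall u v, connect (rs Y) u v -> connect (rs Y') u v.
Proof.
move=> sY u v; apply: connect_sub => s t /= /andP [/andP [sy ty] est].
by apply: connect1; rewrite /rs /= (fintype.subsetP sY _ sy) (fintype.subsetP sY _ ty) est.
Qed.


Lemma conn_orbit x (X : {set T}) (p : {perm T}) a :
  Conn x X -> a \in X -> [forall y, (p y == y) || e y (p y)] -> Conn x (X :|: porbit p a).
Proof.
move=> [xX cX] aX /forallP pe.
have sX : X \subset X :|: porbit p a by apply/fintype.subsetP => y yX; rewrite inE yX.
split; first by rewrite inE xX.
move=> y; rewrite inE => /orP [yX|]; first by move: (rs_sub sX (cX y yX)).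
move=> /porbitP [i ->]; have ca := rs_sub sX (cX a aX); apply: (connect_trans ca).
elim: i => [|i IH]; first by rewrite expg0 perm1 connect0.
apply: connect_trans IH _; rewrite expgSr permM.
have := pe ((p ^+ i)%g a); case/orP => [/eqP -> //|h].
apply: connect1; rewrite /rs /= !inE h mem_porbit orbT /=.
by rewrite -permM -expgSr mem_porbit orbT.
Qed.

Lemma path_in (Y : {set T}) x s : path (rs Y) x s -> forall y, y \in s -> y \in Y.
Proof.
elim: s x => [|z s IH] x //= /andP [/andP [/andP [_ zY] _] ps] y.
by rewrite inE => /orP [/eqP ->|]; [exact: zY| exact: IH ps y].
Qed.

Lemma conn_reach x (Y B : {set T}) b : Conn x Y -> b \in Y -> b \in B ->
  exists n, (n < #|Y|)%N /\ reach e B x n.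
Proof.
move=> [xY cY] bY bB; have /connectP [s ps bl] := cY b bY.
case: (shortenP ps) bl => s' ps' us' _ bl.
exists (size s'); split.
  have : (size (x :: s') <= size (enum Y))%N.
    apply: uniq_leq_size => // y; rewrite inE mem_enum => /orP [/eqP ->//|].
    exact: path_in ps' y.
  by rewrite -cardE.
apply/existsP; exists (in_tuple s'); rewrite /= -bl bB andbT.
by apply: sub_path ps' => u v /andP [_ ->].
Qed.

End Conn.
Section Series.
Variables (R : realType) (p : nat -> R).
Hypothesis p_ge0 : forall k, 0 <= p k.
Hypothesis p_mass : (\sum_(0 <= k <oo) (p k)%:E = 1%:E)%E.

Lemma series_bound l (P : R) : (P%:E <= \sum_(l <= k <oo) (p k)%:E)%E ->
  \sum_(k < l) p k + P <= 1.
Proof.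
move=> hP.
have := @nneseries_split R (fun k => (p k)%:E) 0 l (fun k _ => p_ge0 k).
rewrite p_mass add0n sumEFin big_mkord => h.
rewrite -lee_fin h EFinD; exact: leeD2l.
Qed.

Lemma series_le1 n : \sum_(k < n) p k <= 1.
Proof.
have := @series_bound n 0; rewrite addr0; apply.
by apply: nneseries_ge0 => k _ _; rewrite lee_fin.
Qed.

End Series.
Section Abel.
Variable R : realType.

Lemma mono_chain (phi : nat -> R) N : (forall y, (y < N)%N -> phi y.+1 <= phi y) ->
  forall y, (y <= N)%N -> phi N <= phi y.
Proof.
move=> hm y yN.
have h : forall k, (y + k <= N)%N -> phi (y + k)%N <= phi y.
  elim=> [|k IH] hk; first by rewrite addn0.
  apply: le_trans (IH _) ; last by apply: leq_trans hk; rewrite leq_add2l.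
  by rewrite addnS; apply: hm; rewrite -addnS.
by have := h (N - y)%N; rewrite subnKC //; apply.
Qed.

Lemma split_last (u phi : nat -> R) N :
  \sum_(y < N.+1) u y * phi y =
  \sum_(y < N) u y * (phi y - phi N) + phi N * \sum_(y < N.+1) u y.
Proof.
rewrite !big_ord_recr /= mulrDr.
have -> : \sum_(i < N) u i * (phi i - phi N) = \sum_(i < N) u i * phi i - phi N * \sum_(i < N) u i.
  rewrite mulr_sumr -sumrB; apply: eq_bigr => i _; by rewrite mulrBr [phi N * _]mulrC.
by rewrite [phi N * u N]mulrC; lra.
Qed.

Lemma abel (u v phi : nat -> R) N :
  (forall l, (l <= N)%N -> \sum_(y < l.+1) u y <= \sum_(y < l.+1) v y) ->
  (forall y, (y <= N)%N -> 0 <= phi y) ->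
  (forall y, (y < N)%N -> phi y.+1 <= phi y) ->
  \sum_(y < N.+1) u y * phi y <= \sum_(y < N.+1) v y * phi y.
Proof.
elim: N phi => [|N IH] phi hs h0 hm.
  rewrite !big_ord_recr !big_ord0 /= !add0r; apply: ler_wpM2r; first exact: h0.
  by have := hs 0%N (leqnn _); rewrite !big_ord_recr !big_ord0 /= !add0r.
rewrite (split_last u) (split_last v); apply: lerD.
  apply: (IH (fun y => phi y - phi N.+1)) => [l lN|y yN|y yN].
  - by apply: hs; apply: leqW.
  - rewrite subr_ge0; apply: mono_chain => //; exact: leqW.
  - by rewrite lerD2r; apply: hm; apply: leqW.
by apply: ler_wpM2l; [apply: h0 | apply: hs].
Qed.

Lemma sum_eq_ind n k : \sum_(y < n) ((k == y :> nat)%:R : R) = (k < n)%:R.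
Proof.
elim: n => [|n IH]; first by rewrite big_ord0 ltn0.
rewrite big_ord_recr /= IH ltnS [in RHS]leq_eqVlt.
by case: (ltngtP k n); rewrite /= ?addr0 ?add0r.
Qed.

Lemma sum_eq_val n k (phi : nat -> R) : (k < n)%N ->
  \sum_(y < n) (k == y :> nat)%:R * phi y = phi k.
Proof.
move=> kn; rewrite (bigD1 (Ordinal kn)) //= eqxx mul1r big1 ?addr0 // => i /eqP ne.
case: eqP => [h|_]; last by rewrite mul0r.
by exfalso; apply: ne; apply: val_inj.
Qed.

End Abel.

Section Domination.
Variables (R : realType) (T : finType) (e : rel T) (alpha : R) (q : nat -> R).
Hypothesis q_ge0 : forall a, 0 <= q a.

Lemma dom (W : {set T}) (a : T) (phi : nat -> R) (Dd : nat) :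
  (forall l, \sum_(y < l.+1) q y +
      Prob e alpha W (fun pi => (l.+2 <= #|porbit pi a|)%N) <= 1) ->
  (forall y, 0 <= phi y) -> (forall y, phi y.+1 <= phi y) ->
  \sum_(y < Dd.+1) q y * phi y <=
  \sum_(pi | admissible e W pi) Pr e alpha W pi * phi (#|porbit pi a|.-1).
Proof.
move=> hq h0 hm; pose M := maxn Dd #|T|.
pose v y := \sum_(pi | admissible e W pi) Pr e alpha W pi * (#|porbit pi a|.-1 == y :> nat)%:R.
apply: le_trans (_ : \sum_(y < M.+1) q y * phi y <= _).
  apply: (@sum_widen_le R Dd.+1 M.+1 (fun y => q y * phi y)); first by rewrite ltnS leq_maxl.
  by move=> i; rewrite mulr_ge0.
apply: le_trans (_ : \sum_(y < M.+1) v y * phi y <= _).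
  apply: abel => // l _.
  apply: le_trans (_ : 1 - Prob e alpha W (fun pi => (l.+2 <= #|porbit pi a|)%N) <= _).
    by have := hq l; lra.
  rewrite /Prob ExpE.
  have -> : forall (F : {perm T} -> R), 1 - \sum_(pi | admissible e W pi) Pr e alpha W pi * F pi
      = \sum_(pi | admissible e W pi) Pr e alpha W pi * (1 - F pi).
    move=> F; rewrite -{1}(sumPr e alpha W) -sumrB; apply: eq_bigr => pi _; by rewrite mulrBr mulr1.
  rewrite /v exchange_big /=; apply: ler_sum => pi _.
  rewrite -mulr_sumr sum_eq_ind; apply: ler_wpM2l; first exact: Pr_ge0.
  have := card_porbit_neq0 pi a; case: #|porbit pi a| => [//|k] _ /=.
  by rewrite ltnS ltnS; case: leqP => _; rewrite ?subrr ?subr0.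
rewrite /v; under eq_bigr do rewrite mulr_suml.
rewrite exchange_big /=; apply: ler_sum => pi _.
under eq_bigr do rewrite -mulrA.
rewrite -mulr_sumr; apply: ler_wpM2l; first exact: Pr_ge0.
rewrite sum_eq_val // ltnS; apply: leq_trans (leq_pred _) _.
by apply: leq_trans (max_card _) (leq_maxr _ _).
Qed.

End Domination.
Local Notation set0 := (@finset.set0 _).
Section Main.
Variables (R : realType) (T : finType) (e : rel T) (alpha : R) (q : nat -> R).
Hypothesis q_ge0 : forall a, 0 <= q a.
Hypothesis q_le1 : forall N, \sum_(a < N) q a <= 1.
Hypothesis hq : forall (W : {set T}) a, a \in W -> forall l, \sum_(y < l.+1) q y +
      Prob e alpha W (fun pi => (l.+2 <= #|porbit pi a|)%N) <= 1.
Variables (B : {set T}) (f : {perm T} -> R) (D : nat) (x : T).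
Hypothesis f_meas : FB_measurable e B f.
Hypothesis hD : forall Y : {set T}, Conn e x Y -> (exists2 b, b \in Y & b \in B) -> (D < #|Y|)%N.

Let S := supnorm e f.
Let E (W : {set T}) := Exp e alpha W f.

Lemma S_ge0 : 0 <= S. Proof. exact: supnorm_ge0. Qed.

Lemma E_abs W : `|E W| <= S.
Proof. by apply: Exp_abs => p pT; apply: supnorm_ge. Qed.

Lemma Phi_abs W1 W2 : `|E W1 - E W2| <= 2 * S.
Proof.
apply: le_trans (ler_normB _ _) _; rewrite mulr2n mulrDl mul1r.
by apply: lerD; apply: E_abs.
Qed.

Let okg k := ok_good q_ge0 q_le1 D k.

Lemma gm_ge0 k r n s : 0 <= gm q D k r n s.
Proof. rewrite /gm; exact: (gmk_ge0 q_ge0 (okg k) r n s). Qed.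

Lemma gm_le1 k r n s : gm q D k r n s <= 1.
Proof. rewrite /gm; exact: (gmk_le1 q_ge0 q_le1 (okg k) r n s). Qed.

Lemma bnd_ge0 k r n s : 0 <= 2 * S * (1 - gm q D k r n s).
Proof. by rewrite !mulr_ge0 ?S_ge0 // subr_ge0 gm_le1. Qed.

Definition Inv (W Rr N X : {set T}) :=
  [/\ Rr \subset W, [disjoint N & W], X :&: W = Rr, N \subset X & Conn e x X].

Definition Claim k m := forall W Rr N X : {set T}, Inv W Rr N X ->
  (#|W| + #|N| <= m)%N -> (#|W| + #|N| <= k + (Rr != set0))%N ->
  `|E W - E ((W :\: Rr) :|: N)| <= 2 * S * (1 - gm q D k #|Rr| #|N| #|X|).

Lemma case_empty k (IHk : forall k', k = k'.+1 -> forall m, Claim k' m) (W N X : {set T}) :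
  Inv W set0 N X -> (#|W| + #|N| <= k)%N ->
  `|E W - E ((W :\: set0) :|: N)| <= 2 * S * (1 - gm q D k #|(set0 : {set T})| #|N| #|X|).
Proof.
move=> [_ dNW XW NX cX] hk; rewrite finset.setD0 cards0.
case: (set_0Vmem N) => [-> | [y yN]].
  by rewrite finset.setU0 subrr normr0 bnd_ge0.
have Npos : (0 < #|N|)%N by rewrite card_gt0; apply/set0Pn; exists y.
have NW0 : N :&: W = set0 := disjoint_setI0 dNW.
have cWN : #|W :|: N| = (#|W| + #|N|)%N by rewrite cardsU finset.setIC NW0 cards0 subn0.
case: k IHk hk => [|k] IHk hk; first by exfalso; move: hk; lia.
have inv' : Inv (W :|: N) N set0 X.
  split.
  - by apply/fintype.subsetP => z zN; rewrite inE zN orbT.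
  - by rewrite -setI_eq0 finset.set0I.
  - by rewrite finset.setIUr XW finset.set0U; apply/finset.setIidPr.
  - exact: finset.sub0set.
  - exact: cX.
have := IHk k erefl #|W :|: N| (W :|: N) N set0 X inv'.
rewrite cards0 addn0 leqnn cWN; have -> : (N != set0) by rewrite -card_gt0.
move=> /(_ isT); rewrite addn1 => /(_ hk).
have -> : (W :|: N) :\: N :|: set0 = W.
  rewrite finset.setU0 finset.setDUl finset.setDv finset.setU0; apply/finset.setDidPl.
  by rewrite disjoint_sym.
rewrite distrC /gm gmk0 /= -/(gm q D k #|N| 0 #|X|).
case: (leqP #|X| D) => _; rewrite ?mul1r // mul0r subr0 mulr1 => _.
exact: Phi_abs.
Qed.


Lemma per_pi k m (IHm : Claim k m) (W Rr N X : {set T}) a (pi : {perm T}) :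
  Inv W Rr N X -> a \in Rr -> (#|W| + #|N| <= m.+1)%N -> (#|W| + #|N| <= k.+1)%N ->
  admissible e W pi ->
  `|\sum_(s | admissible e (W :\: porbit pi a) s)
        Pr e alpha (W :\: porbit pi a) s * f (glue (porbit pi a) pi s)
     - E ((W :\: Rr) :|: N)|
  <= 2 * S * (1 - gm q D k #|Rr|.-1 (#|N| + #|porbit pi a|.-1) (#|X| + #|porbit pi a|.-1)).
Proof.
move=> [RW dNW XW NX cX] aR hm hk pW.
set O := porbit pi a.
have aW : a \in W := fintype.subsetP RW a aR.
have OsW : O \subset W := OW aW pW.
have aO : a \in O := porbit_id pi a.
have XWy : forall y, (y \in X) && (y \in W) = (y \in Rr) by move=> y; rewrite -XW inE.
have aX : a \in X by move: (XWy a); rewrite aR => /andP [].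
have RX : forall y, y \in Rr -> y \in X by move=> y; rewrite -XWy => /andP [].
have NWf : forall y, y \in N -> (y \in W) = false by move=> y yN; exact: disjointFr dNW yN.
have pe : [forall y, (pi y == y) || e y (pi y)] by case/andP: pW.
have cXO : Conn e x (X :|: O) := conn_orbit cX aX pe.
have O1 : (0 < #|O|)%N by rewrite lt0n card_porbit_neq0.
have cOR : (#|O :\: Rr| <= #|O|.-1)%N.
  rewrite cardsD; have : (0 < #|O :&: Rr|)%N by rewrite card_gt0; apply/set0Pn; exists a; rewrite inE aO aR.
  lia.
have cXOb : (#|X :|: O| <= #|X| + #|O :\: Rr|)%N.
  have -> : X :|: O = X :|: (O :\: Rr).
    apply/setP => y; rewrite !inE; case: (boolP (y \in O)) => yO; rewrite ?andbT ?andbF ?orbF //.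
    by case yR: (y \in Rr); rewrite /= ?orbT // (RX _ yR).
  rewrite cardsU; lia.
case: (boolP [disjoint O & B]) => dOB.
  have hE : \sum_(s | admissible e (W :\: O) s) Pr e alpha (W :\: O) s * f (glue O pi s) = E (W :\: O).
    rewrite /E ExpE; apply: eq_bigr => s sa; congr (_ * _); apply: f_meas.
    - exact: adm_T (adm_g1 pW sa).
    - exact: adm_T sa.
    - move=> b bB; have bO : (b \in O) = false.
        by apply: disjointFr bB; rewrite disjoint_sym.
      split; first by rewrite (g1E sa) bO.
      have sbO : ((s^-1)%g b \in O) = false.
        apply/negP => h; have := sig_fix sa h; rewrite permKV => hb.
        by move: h; rewrite -hb bO.
      apply: (@perm_inj _ (glue O pi s)); rewrite permKV (g1E sa) sbO; by rewrite permKV.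
  rewrite hE.
  have M_eq : (W :\: Rr) :|: N = ((W :\: O) :\: (Rr :\: O)) :|: (N :|: (O :\: Rr)).
    apply/setP => y; rewrite !inE; case: (boolP (y \in O)) => yO /=.
      have yW := fintype.subsetP OsW y yO; rewrite yW /=.
      case yN : (y \in N); first by rewrite NWf in yW.
      by case: (y \in Rr).
    by case: (y \in Rr); case: (y \in N); case: (y \in W).
  have inv2 : Inv (W :\: O) (Rr :\: O) (N :|: (O :\: Rr)) (X :|: O).
    split.
    - apply/fintype.subsetP => y; rewrite !inE => /andP [-> yR]; by rewrite (fintype.subsetP RW _ yR).
    - rewrite -setI_eq0; apply/eqP/setP => y; rewrite !inE.
      case: (boolP (y \in O)) => yO; rewrite /= ?andbF //= orbF.
      by case yN : (y \in N) => //=; rewrite NWf.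
    - apply/setP => y; rewrite !inE -XWy; case: (boolP (y \in O)) => yO; rewrite /= ?andbF ?orbF //.
    - apply/fintype.subsetP => y; rewrite !inE => /orP [yN|/andP [_ ->]]; last by rewrite orbT.
      by rewrite (fintype.subsetP NX _ yN).
    - exact: cXO.
  have cWO : #|W :\: O| = (#|W| - #|O|)%N by rewrite cardsD (finset.setIidPr OsW).
  have cO : (#|O| <= #|W|)%N := subset_leq_card OsW.
  have cN2 : (#|N :|: (O :\: Rr)| <= #|N| + #|O :\: Rr|)%N by rewrite cardsU; lia.
  have cR2 : (#|Rr :\: O| <= #|Rr|.-1)%N.
    rewrite cardsD; have : (0 < #|Rr :&: O|)%N by rewrite card_gt0; apply/set0Pn; exists a; rewrite inE aO aR.
    lia.
  have h := @IHm _ _ _ _ inv2; rewrite M_eq.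
  have m1 : (#|W :\: O| + #|N :|: O :\: Rr| <= m)%N.
    rewrite cWO; clear -hm cN2 cOR cO O1.
    move: hm cN2 cOR cO O1; move: #|W| #|N| #|O| #|O :\: Rr| #|N :|: O :\: Rr| => w n o o' n'; lia.
  have m2 : (#|W :\: O| + #|N :|: O :\: Rr| <= k)%N.
    rewrite cWO; clear -hk cN2 cOR cO O1.
    move: hk cN2 cOR cO O1; move: #|W| #|N| #|O| #|O :\: Rr| #|N :|: O :\: Rr| => w n o o' n'; lia.
  have := h m1 (leq_trans m2 (leq_addr _ _)) => {}h.
  apply: le_trans h _; apply: ler_wpM2l; first by rewrite mulr_ge0 ?S_ge0.
  rewrite lerD2l lerN2 /gm; apply: (gmk_mon q_ge0 q_le1 (okg k)) => //.
    by apply: leq_trans cN2 _; rewrite leq_add2l.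
  by apply: leq_trans cXOb _; rewrite leq_add2l.
have [b bO bB] : exists2 b, b \in O & b \in B.
  move: dOB; rewrite -setI_eq0 => /set0Pn [b]; rewrite inE => /andP [bO bB]; by exists b.
have hDO : (D < #|X :|: O|)%N by apply: hD cXO _; exists b; rewrite // inE bO orbT.
have gz : gm q D k #|Rr|.-1 (#|N| + #|O|.-1) (#|X| + #|O|.-1) = 0.
  rewrite /gm (gmk_zero q (okg k)) //.
  apply: leq_trans hDO _; apply: leq_trans cXOb _; by rewrite leq_add2l.
rewrite gz subr0 mulr1; apply: le_trans (ler_normB _ _) _; rewrite mulr2n mulrDl mul1r.
apply: lerD; last exact: E_abs.
have -> : \sum_(s | admissible e (W :\: O) s) Pr e alpha (W :\: O) s * f (glue O pi s)
   = Exp e alpha (W :\: O) (fun s => f (glue O pi s)) by rewrite ExpE.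
apply: Exp_absW => s sa; apply: supnorm_ge; exact: adm_T (adm_g1 pW sa).
Qed.

Lemma case_ne k m (IHm : Claim k m) (W Rr N X : {set T}) :
  Inv W Rr N X -> Rr != set0 -> (#|W| + #|N| <= m.+1)%N -> (#|W| + #|N| <= k.+1)%N ->
  `|E W - E ((W :\: Rr) :|: N)| <= 2 * S * (1 - gm q D k #|Rr| #|N| #|X|).
Proof.
move=> inv Rne hm hk; case/set0Pn: (Rne) => a aR.
have [RW _ _ _ _] := inv.
have aW : a \in W := fintype.subsetP RW a aR.
set M := (W :\: Rr) :|: N.
pose phi := fun y => gm q D k #|Rr|.-1 (#|N| + y) (#|X| + y).
have -> : E W - E M = \sum_(pi | admissible e W pi) Pr e alpha W pi *
   ((\sum_(s | admissible e (W :\: porbit pi a) s)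
        Pr e alpha (W :\: porbit pi a) s * f (glue (porbit pi a) pi s)) - E M).
  have eM : E M = \sum_(pi | admissible e W pi) Pr e alpha W pi * E M.
    by rewrite -mulr_suml sumPr mul1r.
  rewrite {1}/E ExpE (markov e alpha aW f) {1}eM -sumrB.
  by apply: eq_bigr => pi _; rewrite mulrBr.
apply: le_trans (ler_norm_sum _ _ _) _.
apply: le_trans (_ : \sum_(pi | admissible e W pi) Pr e alpha W pi *
    (2 * S * (1 - phi #|porbit pi a|.-1)) <= _).
  apply: ler_sum => pi pW; rewrite normrM ger0_norm ?Pr_ge0 //.
  apply: ler_wpM2l; first exact: Pr_ge0.
  exact: (per_pi IHm inv aR hm hk pW).
have -> : \sum_(pi | admissible e W pi) Pr e alpha W pi * (2 * S * (1 - phi #|porbit pi a|.-1))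
   = 2 * S * (1 - \sum_(pi | admissible e W pi) Pr e alpha W pi * phi #|porbit pi a|.-1).
  rewrite -[in X in _ = _ * (X - _)](sumPr e alpha W) -sumrB mulr_sumr; apply: eq_bigr => pi _.
  ring.
apply: ler_wpM2l; first by rewrite mulr_ge0 ?S_ge0.
rewrite lerD2l lerN2.
apply: le_trans (dom (phi := phi) q_ge0 D (hq aW) _ _).
- have hr : #|Rr| = (#|Rr|.-1).+1 by rewrite prednK // card_gt0.
  rewrite /gm {1}hr; apply: le_trans (gmk_M3 q_ge0 (okg k) _ _ _) _.
  by apply: ler_sum => y _; rewrite /phi /gm.
- by move=> y; apply: gm_ge0.
- by move=> y; rewrite /phi /gm; apply: (gmk_mon q_ge0 q_le1 (okg k)); rewrite ?addnS.
Qed.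

Lemma claim k m : Claim k m.
Proof.
elim: k m => [|k IHk] m.
- elim: m => [|m IHm] W Rr N X inv hm hk.
  + have W0 : W = set0 by apply: cards0_eq; move: hm; lia.
    have N0 : N = set0 by apply: cards0_eq; move: hm; lia.
    have [RW _ _ _ _] := inv.
    have R0 : Rr = set0 by apply/eqP; rewrite -finset.subset0 -W0.
    by rewrite W0 N0 R0 finset.setD0 finset.setU0 subrr normr0 bnd_ge0.
  + case: (boolP (Rr == set0)) inv hk => [/eqP -> | Rne] inv hk.
      by apply: case_empty => // k' /=.
    refine (case_ne IHm inv Rne hm _); by move: hk.
- elim: m => [|m IHm] W Rr N X inv hm hk.
  + have W0 : W = set0 by apply: cards0_eq; move: hm; lia.
    have N0 : N = set0 by apply: cards0_eq; move: hm; lia.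
    have [RW _ _ _ _] := inv.
    have R0 : Rr = set0 by apply/eqP; rewrite -finset.subset0 -W0.
    by rewrite W0 N0 R0 finset.setD0 finset.setU0 subrr normr0 bnd_ge0.
  + case: (boolP (Rr == set0)) inv hk => [/eqP -> | Rne] inv hk.
      apply: case_empty => //; last by move: hk; rewrite /= addn0.
      by move=> k' [<-].
    refine (case_ne IHm inv Rne hm _); by move: hk; rewrite addn1.
Qed.

Lemma single (W : {set T}) : x \in W ->
  `|Exp e alpha W f - Exp e alpha (W :\ x) f| <= 2 * supnorm e f * (1 - gm q D #|T| 1 0 1).
Proof.
move=> xW.
have inv : Inv W [set x] set0 [set x].
  split.
  - by rewrite finset.sub1set.
  - by rewrite -setI_eq0 finset.set0I.
  - by apply/setP => y; rewrite !inE; case: eqP => // ->.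
  - exact: finset.sub0set.
  - split; first by rewrite inE.
    by move=> y; rewrite inE => /eqP ->; apply: connect0.
have := @claim #|T| #|W| W [set x] set0 [set x] inv.
rewrite cards0 addn0 cards1 finset.setU0 leqnn => /(_ isT); apply.
by apply: leq_trans (max_card _) (leq_addr _ _).
Qed.

End Main.
Section Final.
Variable R : realType.

Lemma zero_of_bound (t K c : R) : 0 < c ->
  (forall D : nat, t <= K * expR (- c * D%:R)) -> t <= 0.
Proof.
move=> c0 h; rewrite leNgt; apply/negP => t0.
have K0 : 0 < K by have := h 0%N; rewrite mulr0 expR0 mulr1 => /(lt_le_trans t0).
pose D := Num.Def.archi_bound (K / (c * t)).
have hD : K / (c * t) < D%:R by apply: archi_boundP; rewrite divr_ge0 // ?mulr_ge0 // ltW.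
have h1 : K < D%:R * (c * t) by rewrite -ltr_pdivrMr // mulr_gt0.
have h2 : t * expR (c * D%:R) <= K.
  have := h D; rewrite mulNr expRN -ler_pdivlMr ?expR_gt0 //.
have h3 := expR_ge1Dx (c * D%:R).
nra.
Qed.

End Final.

Section Telescope.
Variables (R : realType) (T : finType) (g : T -> R) (Ef : {set T} -> R) (U : {set T}).
Hypothesis h : forall (W : {set T}) y, y \in W -> `|Ef W - Ef (W :\ y)| <= g y.

Lemma telescope (S : {set T}) : S \subset ~: U ->
  `|Ef (U :|: S) - Ef U| <= \sum_(y in S) g y.
Proof.
elim: {S}_.+1 {-2}S (ltnSn #|S|) => // n IH S Sn sS.
case: (set_0Vmem S) => [->|[y yS]].
  by rewrite finset.setU0 subrr normr0 big_set0.
have yU : y \notin U by have := fintype.subsetP sS y yS; rewrite inE.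
rewrite (bigD1 y) //=.
have -> : \sum_(i in S | i != y) g i = \sum_(i in S :\ y) g i.
  by apply: eq_bigl => i; rewrite !inE andbC.
have eW : (U :|: S) :\ y = U :|: (S :\ y).
  apply/setP => i; rewrite !inE; case: (eqVneq i y) => [->|] //=.
  by rewrite (negbTE yU).
have -> : Ef (U :|: S) - Ef U = (Ef (U :|: S) - Ef ((U :|: S) :\ y)) + (Ef (U :|: (S :\ y)) - Ef U).
  by rewrite eW; ring.
apply: le_trans (ler_normD _ _) _; apply: lerD.
  by apply: h; rewrite inE yS orbT.
apply: IH.
  by rewrite -ltnS; apply: leq_trans Sn; rewrite (cardsD1 y S) yS.
by apply/fintype.subsetP => i; rewrite inE => /andP [_ iS]; apply: (fintype.subsetP sS).
Qed.

End Telescope.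
Unset Implicit Arguments.

Theorem proposition4p10 (R : realType) (T : finType) (e : rel T)
  (e_sym : symmetric e) (e_irr : irreflexive e) (alpha : R)
  (U B : {set T}) (BU : B \subset U)
  (p : nat -> R) (* law of xi : P(xi = k) = p k *)
  (p_ge0 : forall k, 0 <= p k)
  (p_mass : (\sum_(0 <= k <oo) (p k)%:E = 1%:E)%E)
  (p0 : p 0%N = 0)
  (p_mean : (\sum_(0 <= k <oo) ((k%:R * p k)%:E) < 2%:E)%E)
  (cycle_bound : forall (l : nat), (0 < l)%N ->
     forall (U' : {set T}) (x : T), x \in U' ->
       ((Prob e alpha U' (fun pi => (l <= #|porbit pi x|)%N))%:E
          <= \sum_(l <= k <oo) (p k)%:E)%E)
  (C kappa : R) (C_gt0 : 0 < C) (kappa_gt0 : 0 < kappa)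
  (gw_tail : forall m n : nat,
     gw_partial_total_gt (fun k => p k.+1) m n
       <= C * expR (- (2 * kappa) * n%:R))
  (f : {perm T} -> R) (f_meas : FB_measurable e B f) :
  `| Exp e alpha [set: T] f - Exp e alpha U f |
    <= 2 * C * supnorm e f * \sum_(x in ~: U) decay e kappa B x.
Proof.
pose q := fun k => p k.+1.
have q_ge0 : forall a, 0 <= q a by move=> a; exact: p_ge0.
have q_le1 : forall N, \sum_(a < N) q a <= 1.
  move=> N; apply: le_trans (series_le1 p_ge0 p_mass N.+1).
  by rewrite big_ord_recl p0 add0r.
have hq : forall (W : {set T}) a, a \in W -> forall l, \sum_(y < l.+1) q y +
      Prob e alpha W (fun pi => (l.+2 <= #|porbit pi a|)%N) <= 1.
  move=> W a aW l; have := series_bound p_ge0 p_mass (cycle_bound l.+2 isT W a aW).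
  by rewrite big_ord_recl p0 add0r.
have S0 : 0 <= supnorm e f := supnorm_ge0 e f.
have key : forall (W : {set T}) y, y \in W ->
    `|Exp e alpha W f - Exp e alpha (W :\ y) f| <= 2 * C * supnorm e f * decay e kappa B y.
  move=> W y yW; rewrite /decay; case: pselect => [hr | hr].
  - set D := ex_minn hr.
    have hD : forall Y : {set T}, Conn e y Y -> (exists2 b, b \in Y & b \in B) -> (D < #|Y|)%N.
      move=> Y cY [b bY bB]; have [n [nY rn]] := conn_reach cY bY bB.
      apply: leq_ltn_trans nY; rewrite /D; case: ex_minnP => m _ hmin; exact: hmin.
    apply: le_trans (single q_ge0 q_le1 hq f_meas hD yW) _.
    have h2 := gw_final q_ge0 q_le1 D #|T|.
    have h3 := gw_tail #|T|.+1 D.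
    have e12 : expR (- (2 * kappa) * D%:R) <= expR (- kappa * D%:R).
      rewrite ler_expR; have : 0 <= kappa * D%:R by rewrite mulr_ge0 // ltW.
      nra.
    have hCe : 0 <= C * (expR (- kappa * D%:R) - expR (- (2 * kappa) * D%:R)).
      by rewrite mulr_ge0 ?subr_ge0 // ltW.
    have h4 : 1 - gm q D #|T| 1 0 1 <= C * expR (- (2 * kappa) * D%:R).
      exact: le_trans h2 h3.
    nra.
  - have hD : forall D : nat, forall Y : {set T}, Conn e y Y ->
        (exists2 b, b \in Y & b \in B) -> (D < #|Y|)%N.
      move=> D Y cY [b bY bB]; have [n [nY rn]] := conn_reach cY bY bB.
      by exfalso; apply: hr; exists n.
    rewrite mulr0; apply: (@zero_of_bound R _ (2 * supnorm e f * C) (2 * kappa)).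
      by rewrite mulr_gt0.
    move=> D; apply: le_trans (single q_ge0 q_le1 hq f_meas (hD D) yW) _.
    have h2 := gw_final q_ge0 q_le1 D #|T|.
    have h3 := gw_tail #|T|.+1 D.
    apply: le_trans (_ : 2 * supnorm e f * (C * expR (- (2 * kappa) * D%:R)) <= _); last by rewrite mulrA.
    apply: ler_wpM2l; first by rewrite mulr_ge0.
    exact: le_trans h2 h3.
have := @telescope R T (fun y => 2 * C * supnorm e f * decay e kappa B y)
   (fun W => Exp e alpha W f) U key (~: U) (fintype.subxx _).
by rewrite finset.setUCr -mulr_sumr.
Qed.
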